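(* Let $\mathcal S$ be a trajectory set satisfying $\bar\sigma(0)\ge0$. If $\bar I(f)=\bar\sigma(f)$ for every $f\in(\mathcal L^1_{(L)})^+$, then the hedging price integral $\int_{(L)}:\mathcal L^1_{(L)}\to\mathbb R$ is strictly positive, i.e. for every $f\in(\mathcal L^1_{(L)})^+$ with $\int_{(L)}f=0$, $f$ is a null function.
   Context: Fix $s_0\in\mathbb R$. A trajectory set is any set $\mathcal S$ of real sequences $S=(S_j)_{j\in\mathbb N_0}$ with $S_0=s_0$. A simple portfolio $(V,n,H)$ consists of $V\in\mathbb R$, $n\in\mathbb N$ and nonanticipating functions $H_i:\mathcal S\to\mathbb R$, $0\le i\le n-1$ (i.e. $H_i(S)=h_i(S_0,\dots,S_i)$ for some arbitrary $h_i:\mathbb R^{i+1}\to\mathbb R$). Its wealth is $\Pi^{V,n,H}_j(S)=V+\sum_{i=0}^{\min\{j,n\}-1}H_i(S)(S_{i+1}-S_i)$ and $\Pi^{V,n,H}_\infty:=\Pi^{V,n,H}_n$; it is positive if $V\ge0$ and $\Pi^{V,n,H}_\infty\ge0$ on $\mathcal S$. A generalized portfolio is a sequence $(V_m,n_m,H_m)_{m\in\mathbb N_0}$ of simple portfolios, positive for every $m\ge1$; it is a positive generalized portfolio if moreover $\Pi^{V_0,n_0,H_0}_j\equiv0$ for all $j$. A map $f:\mathcal S\to[-\infty,+\infty]$ is superhedged with initial endowment $V=\sum_{m=0}^\infty V_m\in(-\infty,+\infty]$ by such a portfolio if $f\le\sum_{m=0}^\infty\Pi^{V_m,n_m,H_m}_\infty$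 on $\mathcal S$. For $f\ge0$, $\bar I(f)$ is the infimum of initial endowments of positive generalized portfolios superhedging $f$; $\bar\sigma(f)$ is the infimum of initial endowments of generalized portfolios superhedging $f$. Let $\mathcal E=\{\Pi^{V,n,H}_\infty\}$ over all simple portfolios. Under $\bar\sigma(0)\ge0$, $I(\Pi^{V,n,H}_\infty):=V$ is a well-defined linear functional on $\mathcal E$. Define $\|f\|:=\bar I(|f|)$; $f$ is a null function if $\|f\|=0$. Let $\mathcal F$ be the space of real-valued $f$ with $\|f\|<\infty$ and $\mathcal E'=\{f\in\mathcal E:\|f\|<\infty\}$. Under $\bar\sigma(0)\ge0$, $I|_{\mathcal E'}$ is $\|\cdot\|$-continuous; $\mathcal L^1_{(L)}$ is the $\|\cdot\|$-closure of $\mathcal E'$ in $\mathcal F$ and $\int_{(L)}$ the unique $\|\cdot\|$-continuous linear extension of $I|_{\mathcal E'}$ to $\mathcal L^1_{(L)}$; it satisfies $\int_{(L)}f=\bar\sigma(f)$ for $f\in\mathcal L^1_{(L)}$. $(\mathcal L^1_{(L)})^+$ denotes the nonnegative elements of $\mathcal L^1_{(L)}$. *)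

(* Defs.v *)
From HB Require Import structures.
From mathcomp Require Import all_boot all_order all_algebra.
From mathcomp Require Import all_classical all_reals all_analysis.
Set Implicit Arguments. Unset Strict Implicit. Unset Printing Implicit Defensive.
Import Order.TTheory GRing.Theory Num.Theory.
Import numFieldNormedType.Exports.
Local Open Scope classical_set_scope.
Local Open Scope ring_scope.

Section Hedging.
Variable R : realType.

Definition traj := nat -> R.

Definition trajectory_set (s0 : R) (Sset : set traj) :=
  forall S, Sset S -> S 0%N = s0.

Definition nonanticipating (H : nat -> traj -> R) :=
  forall (i : nat) (S S' : traj),
    (forall j : nat, (j <= i)%N -> S j = S' j) -> H i S = H i S'.

Definition simple_portfolio (V : R) (n : nat) (H : nat -> traj -> R) :=
  (0 < n)%N /\ nonanticipating H.

Definition wealth (V : R) (n : nat) (H : nat -> traj -> R) (j : nat) (S : traj) : R :=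
  V + \sum_(0 <= i < minn j n) H i S * (S i.+1 - S i).

Definition wealth_inf (V : R) (n : nat) (H : nat -> traj -> R) (S : traj) : R :=
  wealth V n H n S.

Definition positive_portfolio (Sset : set traj) V n H :=
  0 <= V /\ forall S, Sset S -> 0 <= wealth_inf V n H S.

Definition generalized_portfolio (Sset : set traj)
    (V : nat -> R) (n : nat -> nat) (H : nat -> nat -> traj -> R) :=
  (forall m, simple_portfolio (V m) (n m) (H m)) /\
  (forall m, (1 <= m)%N -> positive_portfolio Sset (V m) (n m) (H m)).

Definition positive_generalized_portfolio (Sset : set traj) V n H :=
  generalized_portfolio Sset V n H /\
  (forall (j : nat) S, Sset S -> wealth (V 0%N) (n 0%N) (H 0%N) j S = 0).

(* initial endowment  sum_m V_m  in (-oo,+oo] (terms m >= 1 are >= 0) *)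
Definition endowment (V : nat -> R) : \bar R :=
  ((V 0%N)%:E + \sum_(1 <= m <oo) (V m)%:E)%E.

Definition total_wealth (V : nat -> R) (n : nat -> nat) (H : nat -> nat -> traj -> R)
    (S : traj) : \bar R :=
  ((wealth_inf (V 0%N) (n 0%N) (H 0%N) S)%:E +
   \sum_(1 <= m <oo) (wealth_inf (V m) (n m) (H m) S)%:E)%E.

Definition superhedges (Sset : set traj) (f : traj -> \bar R) V n H :=
  forall S, Sset S -> (f S <= total_wealth V n H S)%E.

Definition Ibar (Sset : set traj) (f : traj -> \bar R) : \bar R :=
  ereal_inf [set e | exists V n H, positive_generalized_portfolio Sset V n H /\
                     superhedges Sset f V n H /\ e = endowment V].

Definition sigmabar (Sset : set traj) (f : traj -> \bar R) : \bar R :=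
  ereal_inf [set e | exists V n H, generalized_portfolio Sset V n H /\
                     superhedges Sset f V n H /\ e = endowment V].

Definition hnorm (Sset : set traj) (f : traj -> R) : \bar R :=
  Ibar Sset (fun S => (`|f S|)%:E).

Definition null_function (Sset : set traj) (f : traj -> R) := hnorm Sset f = 0%E.

Definition Fspace (Sset : set traj) : set (traj -> R) :=
  [set f | (hnorm Sset f < +oo)%E].

Definition Eprime (Sset : set traj) : set (traj -> R) :=
  [set f | (exists V n H, simple_portfolio V n H /\
              forall S, Sset S -> f S = wealth_inf V n H S) /\
           (hnorm Sset f < +oo)%E].

Definition L1 (Sset : set traj) : set (traj -> R) :=
  [set f | Fspace Sset f /\
     forall eps : R, 0 < eps ->
       exists e, Eprime Sset e /\ (hnorm Sset (fun S => (f S - e S)%R) < eps%:E)%E].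

Definition L1plus (Sset : set traj) : set (traj -> R) :=
  [set f | L1 Sset f /\ forall S, Sset S -> 0 <= f S].

(* v is the value of the continuous extension of I|E' at f:
   f is the ||.||-limit of terminal wealths Pi^{V_k,n_k,H_k}_infty in E'
   and v = lim I(Pi^{V_k,n_k,H_k}_infty) = lim V_k *)
Definition is_Lint (Sset : set traj) (f : traj -> R) (v : R) :=
  exists (V : nat -> R) (n : nat -> nat) (H : nat -> nat -> traj -> R),
    (forall k, simple_portfolio (V k) (n k) (H k)) /\
    (forall k, Eprime Sset (wealth_inf (V k) (n k) (H k))) /\
    ((fun k => hnorm Sset (fun S => f S - wealth_inf (V k) (n k) (H k) S)) @ \oo
       --> 0%E) /\
    (V @ \oo --> v).

Definition Lint (Sset : set traj) (f : traj -> R) : R :=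
  xget 0 [set v | is_Lint Sset f v].

End Hedging.

(* Main.v *)
Require Import Defs.
From HB Require Import structures.
From mathcomp Require Import all_boot all_order all_algebra.
From mathcomp Require Import all_classical all_reals all_analysis.
From mathcomp Require Import lra.
Import Order.TTheory GRing.Theory Num.Theory.
Import numFieldNormedType.Exports.
Set Implicit Arguments. Unset Strict Implicit.
Local Open Scope classical_set_scope.
Local Open Scope ring_scope.

Section Aux.
Variable R : realType.

Definition linH (a b : R) (n : nat) (H : nat -> traj R -> R) (n' : nat)
  (H' : nat -> traj R -> R) : nat -> traj R -> R :=
  fun i S => a * (if (i < n)%N then H i S else 0) + b * (if (i < n')%N then H' i S else 0).

Lemma wealth_infE (V : R) n H S :
  wealth_inf V n H S = V + \sum_(0 <= i < n) H i S * (S i.+1 - S i).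
Proof. by rewrite /wealth_inf /wealth minnn. Qed.

Lemma sum_trunc (x : nat -> R) n m : (n <= m)%N ->
  \sum_(0 <= i < m) ((if (i < n)%N then x i else 0)) = \sum_(0 <= i < n) x i.
Proof.
move=> nm; rewrite (big_cat_nat (n:=n)) //=.
rewrite [X in _ + X]big_nat_cond [X in _ + X]big1 ?addr0; last first.
  by move=> i /andP[/andP[ni _] _]; rewrite ltnNge ni.
by apply: eq_big_nat => i /andP[_ ->].
Qed.

Lemma lin_wealth a b (V : R) n H V' n' H' S :
  wealth_inf (a * V + b * V') (maxn n n') (linH a b n H n' H') S =
  a * wealth_inf V n H S + b * wealth_inf V' n' H' S.
Proof.
rewrite !wealth_infE /linH.
under eq_bigr do rewrite mulrDl -!mulrA.
rewrite big_split /= -!mulr_sumr.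
rewrite (_ : \sum_(0 <= i < maxn n n') ((if (i < n)%N then H i S else 0) * (S i.+1 - S i))
   = \sum_(0 <= i < maxn n n') (if (i < n)%N then H i S * (S i.+1 - S i) else 0)); last first.
  by apply: eq_bigr => i _; case: ifP; rewrite ?mul0r.
rewrite (_ : \sum_(0 <= i < maxn n n') ((if (i < n')%N then H' i S else 0) * (S i.+1 - S i))
   = \sum_(0 <= i < maxn n n') (if (i < n')%N then H' i S * (S i.+1 - S i) else 0)); last first.
  by apply: eq_bigr => i _; case: ifP; rewrite ?mul0r.
rewrite !sum_trunc ?leq_maxl ?leq_maxr //.
by rewrite !mulrDr; lra.
Qed.

Lemma lin_simple a b (V : R) n H V' n' H' :
  simple_portfolio V n H -> simple_portfolio V' n' H' ->
  simple_portfolio (a * V + b * V') (maxn n n') (linH a b n H n' H').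
Proof.
move=> [n0 nH] [n0' nH']; split.
  by rewrite (leq_trans n0) ?leq_maxl.
move=> i S S' eqS; by rewrite /linH (nH i S S' eqS) (nH' i S S' eqS).
Qed.


Lemma eq_series1 (f g : nat -> \bar R) :
  (forall m, (1 <= m)%N -> f m = g m) ->
  (\sum_(1 <= m <oo) f m = \sum_(1 <= m <oo) g m)%E.
Proof.
move=> fg.
rewrite (_ : (fun N => \sum_(1 <= m < N) f m)%E = (fun N => \sum_(1 <= m < N) g m)%E) //.
by apply/funext => N; apply: eq_big_nat => i /andP[hi _]; exact: fg.
Qed.

Lemma pgp_V0 (Sset : set (traj R)) V n H : (exists S, Sset S) ->
  positive_generalized_portfolio Sset V n H -> V 0%N = 0.
Proof.
move=> [S SS] [_ W]; have := W 0%N S SS.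
by rewrite /wealth min0n big_geq // addr0.
Qed.

Lemma pgp_W0 (Sset : set (traj R)) V n H :
  positive_generalized_portfolio Sset V n H ->
  forall S, Sset S -> wealth_inf (V 0%N) (n 0%N) (H 0%N) S = 0.
Proof. by move=> [_ W] S SS; exact: W. Qed.

Lemma pgp_endowment (Sset : set (traj R)) V n H : (exists S, Sset S) ->
  positive_generalized_portfolio Sset V n H ->
  endowment V = (\sum_(1 <= m <oo) (V m)%:E)%E.
Proof. by move=> ne P; rewrite /endowment (pgp_V0 ne P) add0e. Qed.

Lemma pgp_total (Sset : set (traj R)) V n H :
  positive_generalized_portfolio Sset V n H ->
  forall S, Sset S ->
  total_wealth V n H S = (\sum_(1 <= m <oo) (wealth_inf (V m) (n m) (H m) S)%:E)%E.
Proof. by move=> P S SS; rewrite /total_wealth (pgp_W0 P SS) add0e. Qed.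

Lemma endowment_ge0 (Sset : set (traj R)) V n H : (exists S, Sset S) ->
  positive_generalized_portfolio Sset V n H -> (0 <= endowment V)%E.
Proof.
move=> ne P; rewrite (pgp_endowment ne P); apply: nneseries_ge0 => m m1 _.
by rewrite lee_fin; case: P => [[_ pos] _]; case: (pos m m1).
Qed.

Lemma total_ge0 (Sset : set (traj R)) V n H :
  positive_generalized_portfolio Sset V n H ->
  forall S, Sset S -> (0 <= total_wealth V n H S)%E.
Proof.
move=> P S SS; rewrite (pgp_total P SS); apply: nneseries_ge0 => m m1 _.
by rewrite lee_fin; case: P => [[_ pos] _]; case: (pos m m1) => _; apply.
Qed.

Lemma combine (Sset : set (traj R)) (v : R) k h VP nP HP VQ nQ HQ :
  (exists S, Sset S) -> simple_portfolio v k h ->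
  positive_generalized_portfolio Sset VP nP HP ->
  positive_generalized_portfolio Sset VQ nQ HQ ->
  exists GV GN GH, generalized_portfolio Sset GV GN GH /\
    endowment GV = (v%:E + endowment VP + endowment VQ)%E /\
    forall S, Sset S -> total_wealth GV GN GH S =
      ((wealth_inf v k h S)%:E + total_wealth VP nP HP S + total_wealth VQ nQ HQ S)%E.
Proof.
move=> ne sv P Q.
have [[sP pP] _] := P; have [[sQ pQ] _] := Q.
exists (fun m => if m is 0%N then v else 1 * VP m + 1 * VQ m).
exists (fun m => if m is 0%N then k else maxn (nP m) (nQ m)).
exists (fun m => if m is 0%N then h else linH 1 1 (nP m) (HP m) (nQ m) (HQ m)).
split; [split|split].
- by case=> [|m] //=; apply: lin_simple.
- case=> [//|m] _ /=; have [P1 P2] := pP m.+1 isT; have [Q1 Q2] := pQ m.+1 isT.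
  split; first by rewrite !mul1r addr_ge0.
  by move=> S SS; rewrite lin_wealth !mul1r addr_ge0 ?P2 ?Q2.
- rewrite /endowment /= (pgp_V0 ne P) (pgp_V0 ne Q) !add0e -addeA.
  congr (_ + _)%E; rewrite -nneseriesD.
  + by apply: eq_series1; case=> [//|m] _ /=; rewrite !mul1r EFinD.
  + by move=> i i1 _; rewrite lee_fin; case: (pP i i1).
  + by move=> i i1 _; rewrite lee_fin; case: (pQ i i1).
- move=> S SS; rewrite /total_wealth /= (pgp_W0 P SS) (pgp_W0 Q SS) !add0e -addeA.
  congr (_ + _)%E; rewrite -nneseriesD.
  + by apply: eq_series1; case=> [//|m] _ /=; rewrite lin_wealth !mul1r EFinD.
  + by move=> i i1 _; rewrite lee_fin; case: (pP i i1) => _; apply.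
  + by move=> i i1 _; rewrite lee_fin; case: (pQ i i1) => _; apply.
Qed.


Lemma Ibar_ext (Sset : set (traj R)) (g g' : traj R -> \bar R) :
  (forall S, Sset S -> g S = g' S) -> Ibar Sset g = Ibar Sset g'.
Proof.
move=> gg; rewrite /Ibar; congr ereal_inf; apply/funext => e; apply/propext.
split=> -[V [n [H [P [sh ->]]]]]; exists V, n, H; (split; [exact: P|split=> //]).
  by move=> S SS; rewrite -gg //; apply: sh.
by move=> S SS; rewrite gg //; apply: sh.
Qed.

Lemma hnorm_ext (Sset : set (traj R)) (f f' : traj R -> R) :
  (forall S, Sset S -> f S = f' S) -> hnorm Sset f = hnorm Sset f'.
Proof. by move=> ff; apply: Ibar_ext => S SS; rewrite ff. Qed.

Lemma nonempty_of (Sset : set (traj R)) :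
  (0 <= sigmabar Sset (fun _ => 0%E))%E -> exists S, Sset S.
Proof.
move=> s0; case: (pselect (exists S, Sset S)) => // nS; exfalso.
have : (sigmabar Sset (fun _ => 0%E) <= (-1)%:E)%E.
  apply: ge_ereal_inf; exists (-1)%:E => //.
  exists (fun m => if m is 0%N then -1 else 0), (fun _ => 1%N), (fun _ _ _ => 0).
  split; [split|split].
  - move=> m; split; first by [].
    by move=> i S S' _.
  - move=> [//|m] _; split; first by [].
    by move=> S SS; exfalso; apply: nS; exists S.
  - by move=> S SS; exfalso; apply: nS; exists S.
  - rewrite /endowment /= eseries0 ?adde0 //.
    by case.
move=> h; have := le_trans s0 h; rewrite lee_fin; lra.
Qed.

Lemma Ibar_ge0 (Sset : set (traj R)) g : (exists S, Sset S) -> (0 <= Ibar Sset g)%E.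
Proof.
move=> ne; apply/ereal_infP => y [V [n [H [P [_ ->]]]]]; exact: endowment_ge0 P.
Qed.

Lemma pick_pgp (Sset : set (traj R)) g (a : R) : (Ibar Sset g < a%:E)%E ->
  exists V n H, positive_generalized_portfolio Sset V n H /\
    superhedges Sset g V n H /\ (endowment V < a%:E)%E.
Proof.
move=> /ereal_inf_lt [y [V [n [H [P [sh ->]]]]] lt]; by exists V, n, H.
Qed.

Lemma cauchy_bound (Sset : set (traj R)) (x : traj R -> R) (V1 : R) n1 H1 (V2 : R) n2 H2 (a b : R) :
  (0 <= sigmabar Sset (fun _ => 0%E))%E ->
  simple_portfolio V1 n1 H1 -> simple_portfolio V2 n2 H2 ->
  (hnorm Sset (fun S => (x S - wealth_inf V1 n1 H1 S)%R) < a%:E)%E ->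
  (hnorm Sset (fun S => (x S - wealth_inf V2 n2 H2 S)%R) < b%:E)%E ->
  V2 - V1 <= a + b.
Proof.
move=> s0 sp1 sp2 h1 h2; have ne := nonempty_of s0.
have [VP [nP [HP [P [shP eP]]]]] := pick_pgp h1.
have [VQ [nQ [HQ [Q [shQ eQ]]]]] := pick_pgp h2.
have sv := lin_simple 1 (-1) sp1 sp2.
have [GV [GN [GH [G [EG TG]]]]] := combine ne sv P Q.
have le : (sigmabar Sset (fun _ => 0%E) <= endowment GV)%E.
  apply: ge_ereal_inf; exists (endowment GV) => //; exists GV, GN, GH.
  split=> //; split=> // S SS; rewrite TG //.
  apply: (@le_trans _ _ ((wealth_inf (1 * V1 + -1 * V2) (maxn n1 n2) (linH 1 (-1) n1 H1 n2 H2) S)%:E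
     + (`|x S - wealth_inf V1 n1 H1 S|)%:E + (`|x S - wealth_inf V2 n2 H2 S|)%:E)%E).
    rewrite -!EFinD lee_fin lin_wealth.
    have := ler_norm (x S - wealth_inf V1 n1 H1 S).
    have := ler_norm (wealth_inf V2 n2 H2 S - x S); rewrite distrC; lra.
  by apply: leeD; [apply: leeD => //; exact: shP|exact: shQ].
have : (0 <= ((1 * V1 + -1 * V2) + a + b)%:E)%E.
  apply: le_trans (le_trans s0 le) _; rewrite EG !EFinD.
  by apply: leeD; [apply: leeD => //|]; apply: ltW.
rewrite lee_fin; lra.
Qed.

Lemma upper_bound (Sset : set (traj R)) (f : traj R -> R) (V : R) n H (a : R) :
  (exists S, Sset S) -> simple_portfolio V n H ->
  (hnorm Sset (fun S => (f S - wealth_inf V n H S)%R) < a%:E)%E ->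
  (sigmabar Sset (fun S => (f S)%:E) <= (V + a + a)%:E)%E.
Proof.
move=> ne sp h; have [VP [nP [HP [P [shP eP]]]]] := pick_pgp h.
have [GV [GN [GH [G [EG TG]]]]] := combine ne sp P P.
apply: ge_ereal_inf; exists (endowment GV).
  exists GV, GN, GH; split=> //; split=> // S SS; rewrite TG //.
  apply: (@le_trans _ _ ((wealth_inf V n H S)%:E
     + (`|f S - wealth_inf V n H S|)%:E + 0)%E).
    rewrite -!EFinD lee_fin.
    have := ler_norm (f S - wealth_inf V n H S); lra.
  by apply: leeD; [apply: leeD => //; exact: shP|exact: total_ge0 P S SS].
by rewrite EG !EFinD; apply: leeD; [apply: leeD => //|]; apply: ltW.
Qed.

End Aux.

Theorem proposition3p9 (R : realType) (s0 : R) (Sset : set (traj R)) :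
  trajectory_set s0 Sset ->
  (0 <= sigmabar Sset (fun _ => 0%E))%E ->
  (forall f, L1plus Sset f ->
     Ibar Sset (fun S => (f S)%:E) = sigmabar Sset (fun S => (f S)%:E)) ->
  forall f, L1plus Sset f -> Lint Sset f = 0 -> null_function Sset f.
Proof.
move=> _ hs0 IS f fL; have [[Ff L1f] fpos] := fL; move=> Lf0.
have ne := nonempty_of hs0.
have ex : exists v, is_Lint Sset f v.
  have : forall k, exists p : R * nat * (nat -> traj R -> R),
      simple_portfolio p.1.1 p.1.2 p.2 /\
      (hnorm Sset (fun S => (f S - wealth_inf p.1.1 p.1.2 p.2 S)%R) < (harmonic k)%:E)%E /\
      (hnorm Sset (wealth_inf p.1.1 p.1.2 p.2) < +oo)%E.
    move=> k; have [e [[[V [n [H [sp eW]]]] fin] he]] := L1f _ (harmonic_gt0 k).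
    exists (V, n, H) => /=; split => //; split.
      by rewrite -(@hnorm_ext _ _ (fun S => f S - e S)) // => S SS; rewrite eW.
    by rewrite -(@hnorm_ext _ _ e).
  move=> /choice [p hp].
  pose V := fun k => (p k).1.1; pose n := fun k => (p k).1.2; pose H := fun k => (p k).2.
  have cb : forall k l, `|V k - V l| <= harmonic k + harmonic l.
    move=> k l; rewrite ler_norml; apply/andP; split.
      have [spk [hk _]] := hp k; have [spl [hl _]] := hp l.
      have := cauchy_bound hs0 spk spl hk hl; rewrite /V; lra.
    have [spk [hk _]] := hp k; have [spl [hl _]] := hp l.
    have := cauchy_bound hs0 spl spk hl hk; rewrite /V; lra.
  have cv : cvgn V.
    apply: R_complete; apply: cauchy_exP => e e0.
    have e20 : 0 < e / 2 by lra.
    have := @cvg_harmonic R; move/cvgr_dist_lt => /(_ _ e20).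
    move=> [N _ hN]; exists (V N); exists N => // k /= Nk.
    rewrite -ball_normE /=.
    have a1 := hN N (leqnn N); have a2 := hN k Nk.
    rewrite /= sub0r normrN in a1; rewrite /= sub0r normrN in a2.
    have := ler_norm (harmonic N : R); have := ler_norm (harmonic k : R).
    have := cb N k; lra.
  exists (limn V), V, n, H; split; first by move=> k; case: (hp k).
  split.
    move=> k; have [spk [_ fk]] := hp k; split => //.
    by exists (V k), (n k), (H k).
  split; last exact: cv.
  apply: (squeeze_cvge _ (cvg_cst _) (@cvge_harmonic R)).
  - apply: nearW => k; have [_ [hk _]] := hp k; apply/andP; split.
      exact: Ibar_ge0.
    exact: ltW.
have : is_Lint Sset f (Lint Sset f) by exact: xgetPex.
rewrite Lf0 => -[V [n [H [sp [_ [hc vc]]]]]].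
have sig_le : (sigmabar Sset (fun S => (f S)%:E) <= 0)%E.
  apply/lee_addgt0Pr => e e0; rewrite add0e.
  have e30 : 0 < e / 3 by lra.
  move/fine_cvgP: hc => [hfin hfc].
  move/cvgr_dist_lt: hfc => /(_ _ e30) [N1 _ h1].
  move/cvgr_dist_lt: vc => /(_ _ e30) [N2 _ h2].
  move: hfin => [N3 _ h3].
  pose k := maxn N1 (maxn N2 N3).
  have k1 : (N1 <= k)%N by rewrite leq_maxl.
  have k2 : (N2 <= k)%N by rewrite /k (leq_trans _ (leq_maxr _ _)) ?leq_maxl.
  have k3 : (N3 <= k)%N by rewrite /k (leq_trans _ (leq_maxr _ _)) ?leq_maxr.
  have a1 := h1 k k1; have a2 := h2 k k2; have a3 := h3 k k3.
  rewrite /= sub0r normrN in a1; rewrite /= sub0r normrN in a2.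
  have hk : (hnorm Sset (fun S => (f S - wealth_inf (V k) (n k) (H k) S)%R) < (e / 3)%:E)%E.
    rewrite -(fineK a3) lte_fin.
    by apply: le_lt_trans a1; apply: ler_norm.
  apply: le_trans (upper_bound ne (sp k) hk) _.
  rewrite lee_fin; have := ler_norm (V k); lra.
have hf : hnorm Sset f = sigmabar Sset (fun S => (f S)%:E).
  rewrite -IS // /hnorm; apply: Ibar_ext => S SS; rewrite ger0_norm //; exact: fpos.
rewrite /null_function hf; apply/eqP; rewrite eq_le sig_le /= -hf.
exact: Ibar_ge0.
Qed.
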